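(* Let $I$ be a finite set and $T$ a tree on $I$. The lattice $[\hat{0},T]$ (an interval of $\operatorname{For}(I)$) is EL-shellable.
   Context: A tree on a finite set $I$ is a (non-planar) rooted binary tree whose leaves are bijectively labeled by $I$: vertices are inner vertices (valence $3$) and leaves and the root (valence $1$), edges oriented towards the root; one-leaf trees are allowed. A forest on $I$ is a set of trees whose leaf sets partition $I$. For forests $F,G$ on $I$, $F \leq G$ if there is a continuous map $F\to G$ which (D1) is increasing with respect to orientation towards the root, (D2) maps inner vertices to inner vertices injectively, (D3) is the identity of $I$ on leaves, (D4) is injective on each tree of $F$. This gives the poset $\operatorname{For}(I)$, graded by the number of inner vertices, with minimum $\hat{0}$ (no inner vertices). An edge-labeling of a poset $P$ is a map $\lambda$ from the set of covering pairs $x\lhd y$ to $\mathbb{N}$; a saturated chain $x_0\lhd\dots\lhd x_k$ has label $(\lambda(x_0,x_1),\dots,\lambda(x_{k-1},x_k))$ and is increasing if this sequence is weakly increasing. An EL-labeling is an edge-labeling such that every interval $[x,y]$ has exactly one increasing saturated chain from $x$ to $y$, and its label is strictly lexicographically smaller than the label of every other saturated chain from $x$ to $y$. A graded poset is EL-shellable if it admits an EL-labeling. *)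

(* Defs.v *)
From mathcomp Require Import all_boot.
Set Implicit Arguments. Unset Strict Implicit. Unset Printing Implicit Defensive.

(* A (non-planar) rooted binary forest whose leaves are bijectively labelled  *)
(* by I is encoded by the set of leaf sets ("clusters") of its non-root       *)
(* vertices: leaves <-> singletons {i}, inner vertices <-> clusters with at   *)
(* least two elements, ancestor order <-> inclusion, trees <-> maximal        *)
(* clusters.  This is the standard bijective encoding (hierarchies).          *)

Section Forests.
Variable I : finType.

Definition inner (A : {set I}) : bool := 1 < #|A|.

Definition is_forest (F : {set {set I}}) : bool :=
  [&& set0 \notin F,
      [forall i, [set i] \in F],
      [forall A in F, forall B in F,
          [|| A \subset B, B \subset A | [disjoint A & B]]] &
      [forall A in F, inner A ==>
          [exists B1 in F, exists B2 in F,
              [disjoint B1 & B2] && (B1 :|: B2 == A)]]].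

(* a tree on I: a forest consisting of a single tree, whose leaf set is I *)
Definition is_tree (F : {set {set I}}) : bool := is_forest F && (setT \in F).

Definition child (F : {set {set I}}) (C D : {set I}) : bool :=
  [&& C \in F, D \in F, C \proper D &
      [forall E in F, ~~ ((C \proper E) && (E \proper D))]].

(* The order of For(I): F <= G iff there is a map F -> G satisfying (D1)-(D4).
   Since (D2),(D3) force vertices (other than roots) to go to vertices, and
   continuous increasing maps send edges to upward paths, such a map is
   determined (up to reparametrisation) by its values phi on the non-root
   vertices of F (clusters), with:
   - (D3) phi {i} = {i};
   - (D2) inner vertices go to inner vertices of G, injectively;
   - (D1) increasing: the child C of D goes strictly below phi D
          (strict, since the map is injective on each tree, (D4));
   - (D4) injectivity on each tree: the images of the two children of an
          inner vertex D lie in two different child subtrees of phi D.       *)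
Definition forest_le (F G : {set {set I}}) : Prop :=
  exists phi : {set I} -> {set I},
  [/\ forall i : I, phi [set i] = [set i],
      forall A, A \in F -> inner A -> phi A \in G /\ inner (phi A),
      {in [pred A | (A \in F) && inner A] &, injective phi},
      forall C D, child F C D -> phi C \proper phi D &
      forall D C1 C2, child F C1 D -> child F C2 D -> C1 != C2 ->
        exists E1 E2, [/\ child G E1 (phi D), child G E2 (phi D), E1 != E2,
                          phi C1 \subset E1 & phi C2 \subset E2]].

Definition forest0 : {set {set I}} := [set [set i] | i : I].

Definition interval0 (T : {set {set I}}) (F : {set {set I}}) : Prop :=
  is_forest F /\ forest_le forest0 F /\ forest_le F T.

End Forests.

Section EL.
Variables (T : Type) (P : T -> Prop) (le : T -> T -> Prop).

Definition plt (x y : T) : Prop := le x y /\ x <> y.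

Definition covers (x y : T) : Prop :=
  [/\ P x, P y, plt x y & ~ (exists z, [/\ P z, plt x z & plt z y])].

(* x = x_0 <| x_1 <| ... <| x_k = y, where s = [:: x_1; ...; x_k] *)
Fixpoint sat_chain (x : T) (s : seq T) (y : T) : Prop :=
  match s with
  | [::] => x = y
  | z :: s' => covers x z /\ sat_chain z s' y
  end.

Definition chain_label (lam : T -> T -> nat) (x : T) (s : seq T) : seq nat :=
  pairmap lam x s.

Fixpoint lexlt (a b : seq nat) : bool :=
  match a, b with
  | [::], [::] => false
  | [::], _ :: _ => true
  | _ :: _, [::] => false
  | u :: a', v :: b' => (u < v) || ((u == v) && lexlt a' b')
  end.

Definition EL_labeling (lam : T -> T -> nat) : Prop :=
  forall x y, P x -> P y -> le x y ->
    exists s, [/\ sat_chain x s y,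
                  sorted leq (chain_label lam x s),
                  (forall s', sat_chain x s' y ->
                     sorted leq (chain_label lam x s') -> s' = s) &
                  (forall s', sat_chain x s' y -> s' <> s ->
                     lexlt (chain_label lam x s) (chain_label lam x s'))].

Definition EL_shellable : Prop := exists lam, EL_labeling lam.

End EL.

(* Main.v *)
Require Import Defs.
From mathcomp Require Import all_boot.
Set Implicit Arguments. Unset Strict Implicit. Unset Printing Implicit Defensive.


Section ForestBasics.
Variable I : finType.
Implicit Types (F G : {set {set I}}) (A B C D E : {set I}).

Lemma forest_nonempty F A : is_forest F -> A \in F -> A != set0.
Proof. by case/and4P=> h0 _ _ _ AF; apply: contraNneq h0 => <-. Qed.

Lemma forest_single F i : is_forest F -> [set i] \in F.
Proof. by case/and4P=> _ /forallP h _ _. Qed.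

Lemma forest_lam F A B : is_forest F -> A \in F -> B \in F ->
  [|| A \subset B, B \subset A | [disjoint A & B]].
Proof.
case/and4P=> _ _ /forall_inP h _ AF BF.
by move/forall_inP: (h A AF); apply.
Qed.

Lemma forest_meet F A B x : is_forest F -> A \in F -> B \in F -> x \in A -> x \in B ->
  (A \subset B) || (B \subset A).
Proof.
move=> hF AF BF xA xB; case/or3P: (forest_lam hF AF BF) => [->|->|] //; rewrite ?orbT //.
by move/disjointFr => /(_ x xA); rewrite xB.
Qed.

Lemma forest_split F A : is_forest F -> A \in F -> inner A ->
  exists B1, exists B2, [/\ B1 \in F, B2 \in F, [disjoint B1 & B2] & B1 :|: B2 = A].
Proof.
case/and4P=> _ _ _ /forall_inP h AF iA; move/implyP: (h A AF) => /(_ iA).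
by case/exists_inP=> B1 B1F /exists_inP [B2 B2F /andP [dis /eqP e]]; exists B1, B2.
Qed.

Lemma is_forestI F : set0 \notin F -> (forall i, [set i] \in F) ->
  (forall A B, A \in F -> B \in F -> [|| A \subset B, B \subset A | [disjoint A & B]]) ->
  (forall A, A \in F -> inner A -> exists B1, exists B2,
      [/\ B1 \in F, B2 \in F, [disjoint B1 & B2] & B1 :|: B2 = A]) -> is_forest F.
Proof.
move=> h0 h1 h2 h3; apply/and4P; split=> //.
- by apply/forallP.
- by apply/forall_inP=> A AF; apply/forall_inP=> B BF; apply: h2.
apply/forall_inP=> A AF; apply/implyP=> iA.
have [B1 [B2 [B1F B2F dis e]]] := h3 A AF iA.
by apply/exists_inP; exists B1 => //; apply/exists_inP; exists B2 => //; rewrite dis e eqxx.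
Qed.

Lemma disj_sub_nonempty A B : A \subset B -> [disjoint A & B] -> A != set0 -> False.
Proof.
move=> sAB dis /set0Pn [x xA].
by move: (disjointFr dis xA); rewrite (subsetP sAB x xA).
Qed.

Lemma not_inner_single A : A != set0 -> ~~ inner A -> exists x, A = [set x].
Proof.
move=> nA iA; apply/cards1P; rewrite /inner -leqNgt in iA.
by rewrite eqn_leq iA card_gt0.
Qed.

Lemma sub_single A x : A != set0 -> A \subset [set x] -> A = [set x].
Proof. by move=> nA; rewrite subset1 (negbTE nA) orbF => /eqP. Qed.

Section Split.
Variables (F : {set {set I}}) (A B1 B2 : {set I}).
Hypotheses (hF : is_forest F) (B1F : B1 \in F) (B2F : B2 \in F)
  (dis : [disjoint B1 & B2]) (e : B1 :|: B2 = A).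

Lemma split_sub1 : B1 \subset A.
Proof using hF B1F B2F dis e. by rewrite -e subsetUl. Qed.
Lemma split_sub2 : B2 \subset A.
Proof using hF B1F B2F dis e. by rewrite -e subsetUr. Qed.

Lemma split_proper1 : B1 \proper A.
Proof using hF B1F B2F dis e.
rewrite properEneq split_sub1 andbT; apply/eqP=> eB.
apply: (disj_sub_nonempty (A := B2) (B := B1)).
- by rewrite eB split_sub2.
- by rewrite disjoint_sym.
- exact: forest_nonempty hF B2F.
Qed.

Lemma split_proper2 : B2 \proper A.
Proof using hF B1F B2F dis e.
rewrite properEneq split_sub2 andbT; apply/eqP=> eB.
apply: (disj_sub_nonempty (A := B1) (B := B2)) => //.
- by rewrite eB split_sub1.
- exact: forest_nonempty hF B1F.
Qed.

Lemma sub_split1 C x : C \in F -> C \proper A -> x \in C -> x \in B1 -> C \subset B1.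
Proof using hF B1F B2F dis e.
move=> CF pCA xC xB1; apply/subsetP=> y yC.
have yA : y \in A by apply: (subsetP (proper_sub pCA)).
move: yA; rewrite -e inE => /orP [//|yB2]; exfalso.
case/orP: (forest_meet hF CF B2F yC yB2) => [sCB2|sB2C].
- by move: (disjointFr dis xB1); rewrite (subsetP sCB2 x xC).
case/orP: (forest_meet hF CF B1F xC xB1) => [sCB1|sB1C].
- by move: (disjointFr dis (subsetP sCB1 y yC)); rewrite yB2.
move: pCA; rewrite properE -e => /andP [_]; by rewrite subUset sB1C sB2C.
Qed.

Lemma sub_split C : C \in F -> C \proper A -> (C \subset B1) || (C \subset B2).
Proof using hF B1F B2F dis e.
move=> CF pCA; have /set0Pn [x xC] := forest_nonempty hF CF.
have : x \in A by apply: (subsetP (proper_sub pCA)).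
rewrite -e inE => /orP [xB1|xB2].
- by rewrite (sub_split1 CF pCA xC xB1).
apply/orP; right.
apply/subsetP=> y yC.
have yA : y \in A by apply: (subsetP (proper_sub pCA)).
move: yA; rewrite -e inE => /orP [yB1|//]; exfalso.
case/orP: (forest_meet hF CF B1F yC yB1) => [sCB1|sB1C].
- by move: (disjointFr dis (subsetP sCB1 x xC)); rewrite xB2.
case/orP: (forest_meet hF CF B2F xC xB2) => [sCB2|sB2C].
- by move: (disjointFr dis yB1); rewrite (subsetP sCB2 y yC).
move: pCA; rewrite properE -e => /andP [_]; by rewrite subUset sB1C sB2C.
Qed.

Lemma split_child1 : A \in F -> child F B1 A.
Proof using hF B1F B2F dis e.
move=> AF; apply/and4P; split=> //; first exact: split_proper1.
apply/forall_inP=> E EF; apply/negP=> /andP [p1 p2].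
case/orP: (sub_split EF p2) => s.
- by move: p1; rewrite properE s andbF.
apply: (disj_sub_nonempty (A := B1) (B := B2)) => //.
- exact: subset_trans (proper_sub p1) s.
- exact: forest_nonempty hF B1F.
Qed.

Lemma child_split C : child F C A -> C = B1 \/ C = B2.
Proof using hF B1F B2F dis e.
case/and4P=> CF _ pCA /forall_inP h.
case/orP: (sub_split CF pCA) => s.
- left; apply/eqP; rewrite eqEproper s /=; apply/negP=> p.
  by move: (h B1 B1F); rewrite p split_proper1.
- right; apply/eqP; rewrite eqEproper s /=; apply/negP=> p.
  by move: (h B2 B2F); rewrite p split_proper2.
Qed.

End Split.

Lemma split_child2 F A B1 B2 : is_forest F -> A \in F -> B1 \in F -> B2 \in F ->
  [disjoint B1 & B2] -> B1 :|: B2 = A -> child F B2 A.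
Proof.
move=> hF AF B1F B2F dis e; apply: (split_child1 hF B2F B1F) => //.
  by rewrite disjoint_sym.
by rewrite setUC.
Qed.

Lemma child_inner F C A : is_forest F -> child F C A -> inner A.
Proof.
move=> hF /and4P [CF _ pCA _]; rewrite /inner.
apply: leq_trans (proper_card pCA); by rewrite ltnS card_gt0 (forest_nonempty hF CF).
Qed.

Lemma child2_split F A E1 E2 : is_forest F -> child F E1 A -> child F E2 A -> E1 != E2 ->
  [disjoint E1 & E2] /\ E1 :|: E2 = A.
Proof.
move=> hF c1 c2 ne.
have AF : A \in F by case/and4P: c1.
have [B1 [B2 [B1F B2F dis e]]] := forest_split hF AF (child_inner hF c1).
move: ne; case: (child_split hF B1F B2F dis e c1) => ->;
case: (child_split hF B1F B2F dis e c2) => ->; rewrite ?eqxx // => _.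
by rewrite disjoint_sym setUC.
Qed.

End ForestBasics.


Definition hull (I : finType) (T : {set {set I}}) (A : {set I}) : {set I} :=
  [arg min_(B < setT | (B \in T) && (A \subset B)) #|B|].

Section Hull.
Variables (I : finType) (T : {set {set I}}).
Hypothesis hT : is_tree T.
Implicit Types (F G : {set {set I}}) (A B C D E : {set I}).

Lemma hTf : is_forest T. Proof. by case/andP: hT. Qed.
Lemma hTT : setT \in T. Proof. by case/andP: hT. Qed.

Local Notation hull := (hull T).

Lemma hullP A : A != set0 ->
  [/\ hull A \in T, A \subset hull A & forall B, B \in T -> A \subset B -> hull A \subset B].
Proof.
move=> nA; rewrite /hull; case: arg_minnP; first by rewrite hTT subsetT.
move=> B /andP [BT sAB] hmin; split=> // C CT sAC.
have /set0Pn [x xA] := nA.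
case/orP: (forest_meet hTf BT CT (subsetP sAB x xA) (subsetP sAC x xA)) => // sCB.
have := hmin C; rewrite CT sAC => /(_ isT) le.
suff -> : B = C by [].
by apply/eqP; rewrite eq_sym eqEcard sCB le.
Qed.

Lemma hull_in A : A != set0 -> hull A \in T.
Proof. by case/hullP. Qed.
Lemma sub_hull A : A != set0 -> A \subset hull A.
Proof. by case/hullP. Qed.
Lemma hull_min A B : A != set0 -> B \in T -> A \subset B -> hull A \subset B.
Proof. by case/hullP=> _ _; apply. Qed.

Lemma hull_id B : B \in T -> hull B = B.
Proof.
move=> BT; have nB := forest_nonempty hTf BT.
by apply/eqP; rewrite eqEsubset hull_min // sub_hull.
Qed.

Lemma hull_mono A B : A != set0 -> A \subset B -> hull A \subset hull B.
Proof.
move=> nA sAB.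
have nB : B != set0.
  by apply: contraNneq nA => eB; apply/eqP; apply/setP=> x; rewrite inE; apply/negP=> /(subsetP sAB); rewrite eB inE.
by apply: hull_min => //; [exact: hull_in | exact: subset_trans sAB (sub_hull nB)].
Qed.

Lemma hull_set1 x : hull [set x] = [set x].
Proof. exact/hull_id/forest_single/hTf. Qed.

Lemma hull_single A x : A != set0 -> hull A = [set x] -> A = [set x].
Proof. by move=> nA e; apply: sub_single => //; rewrite -e sub_hull. Qed.

Lemma hull_sides u X Y A : u \in T -> X \in T -> Y \in T -> [disjoint X & Y] ->
  X :|: Y = u -> A != set0 -> A \subset u -> hull A != u ->
  (hull A \subset X) || (hull A \subset Y).
Proof.
move=> uT XT YT dis e nA sAu ne.
apply: (sub_split hTf XT YT dis e (hull_in nA)).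
by rewrite properEneq ne hull_min.
Qed.

Lemma hull_both u X Y A x y : u \in T -> X \in T -> Y \in T -> [disjoint X & Y] ->
  X :|: Y = u -> A \subset u -> x \in A -> x \in X -> y \in A -> y \in Y -> hull A = u.
Proof.
move=> uT XT YT dis e sAu xA xX yA yY.
have nA : A != set0 by apply/set0Pn; exists x.
apply/eqP; apply/negPn/negP=> ne.
case/orP: (hull_sides uT XT YT dis e nA sAu ne) => s.
- by move: (disjointFr dis (subsetP s y (subsetP (sub_hull nA) y yA))); rewrite yY.
- by move: (disjointFr dis xX); rewrite (subsetP s x (subsetP (sub_hull nA) x xA)).
Qed.

Lemma hull_inner A : A != set0 -> inner A -> inner (hull A).
Proof. by move=> nA; rewrite /inner => h; apply: leq_trans h (subset_leq_card (sub_hull nA)). Qed.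

Definition Pf F := is_forest F /\ {in F &, injective hull}.

Lemma Pf_T : Pf T.
Proof. by split; [exact: hTf | move=> A B AT BT; rewrite !hull_id]. Qed.

Lemma hull_proper F C D : Pf F -> C \in F -> D \in F -> C \proper D -> hull C \proper hull D.
Proof.
case=> hF inj CF DF pCD; rewrite properEneq hull_mono ?(forest_nonempty hF) ?andbT ?(proper_sub pCD) //.
apply/eqP=> /inj => /(_ CF DF) eCD; by move: pCD; rewrite eCD properE andbN.
Qed.

Lemma hull_sub F C D : Pf F -> C \in F -> D \in F -> C \subset D -> hull C \subset hull D.
Proof. by case=> hF _ CF DF; apply: hull_mono; apply: forest_nonempty hF CF. Qed.

Lemma T_split u : u \in T -> inner u -> exists X, exists Y,
  [/\ X \in T, Y \in T, [disjoint X & Y] & X :|: Y = u].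
Proof. exact: forest_split hTf. Qed.

Lemma split_sides F B B1 B2 X Y : Pf F -> B \in F -> B1 \in F -> B2 \in F ->
  [disjoint B1 & B2] -> B1 :|: B2 = B ->
  X \in T -> Y \in T -> [disjoint X & Y] -> X :|: Y = hull B ->
  (B1 \subset X) && (B2 \subset Y) || (B1 \subset Y) && (B2 \subset X).
Proof.
move=> PF BF B1F B2F dis e XT YT disXY eXY.
have hF := PF.1.
have nB := forest_nonempty hF BF.
have uT := hull_in nB.
have side Bi : Bi \in F -> Bi \proper B -> (Bi \subset X) || (Bi \subset Y).
  move=> BiF p; have nBi := forest_nonempty hF BiF.
  have ph := hull_proper PF BiF BF p.
  have ne : hull Bi != hull B by move: ph; rewrite properEneq => /andP [].
  case/orP: (hull_sides uT XT YT disXY eXY nBi (subset_trans (proper_sub p) (sub_hull nB)) ne) => s.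
  - by rewrite (subset_trans (sub_hull nBi) s).
  - by rewrite (subset_trans (sub_hull nBi) s) orbT.
have p1 := split_proper1 hF B1F B2F dis e.
have p2 := split_proper2 hF B1F B2F dis e.
have nX := forest_nonempty hTf XT.
have nY := forest_nonempty hTf YT.
case/orP: (side B1 B1F p1) => s1; case/orP: (side B2 B2F p2) => s2; rewrite ?s1 ?s2 ?orbT //.
- exfalso; apply: (disj_sub_nonempty (A := Y) (B := X)) => //; last by rewrite disjoint_sym.
  have : hull B \subset X by apply: hull_min => //; rewrite -e subUset s1 s2.
  by rewrite -eXY subUset => /andP [].
- exfalso; apply: (disj_sub_nonempty (A := X) (B := Y)) => //.
  have : hull B \subset Y by apply: hull_min => //; rewrite -e subUset s1 s2.
  by rewrite -eXY subUset => /andP [].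
Qed.

End Hull.


Definition phi_ok (I : finType) (F G : {set {set I}}) (phi : {set I} -> {set I}) :=
  [/\ forall i : I, phi [set i] = [set i],
      forall A, A \in F -> inner A -> phi A \in G /\ inner (phi A),
      {in [pred A | (A \in F) && inner A] &, injective phi},
      forall C D, child F C D -> phi C \proper phi D &
      forall D C1 C2, child F C1 D -> child F C2 D -> C1 != C2 ->
        exists E1 E2, [/\ child G E1 (phi D), child G E2 (phi D), E1 != E2,
                          phi C1 \subset E1 & phi C2 \subset E2]].

Section Order.
Variables (I : finType) (T : {set {set I}}).
Hypothesis hT : is_tree T.
Implicit Types (F G : {set {set I}}) (A B C D E : {set I}).
Local Notation hull := (hull T).
Local Notation Pf := (Pf T).

Lemma strong_ind (P : {set I} -> Prop) :
  (forall D, (forall C, #|C| < #|D| -> P C) -> P D) -> forall D, P D.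
Proof.
move=> h D; elim: {D}#|D|.+1 {-2}D (ltnSn #|D|) => [|n IH] D hD //.
by apply: h => C hC; apply: IH; apply: leq_trans hC _.
Qed.

Lemma le_phi_sub F G phi : is_forest F -> phi_ok F G phi ->
  forall D, D \in F -> D \subset phi D.
Proof.
move=> hF [h1 h2 h3 h4 h5].
elim/strong_ind=> D IH DF.
have nD := forest_nonempty hF DF.
case: (boolP (inner D)) => iD.
- have [D1 [D2 [D1F D2F dis e]]] := forest_split hF DF iD.
  have c1 := split_child1 hF D1F D2F dis e DF.
  have c2 := split_child2 hF DF D1F D2F dis e.
  have p1 := split_proper1 hF D1F D2F dis e.
  have p2 := split_proper2 hF D1F D2F dis e.
  rewrite -{1}e subUset; apply/andP; split.
  + apply: subset_trans (IH _ (proper_card p1) D1F) (proper_sub (h4 _ _ c1)).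
  + apply: subset_trans (IH _ (proper_card p2) D2F) (proper_sub (h4 _ _ c2)).
- by have [x ->] := not_inner_single nD iD; rewrite h1.
Qed.

Lemma le_phi_hull F G phi : is_forest F -> Pf G -> phi_ok F G phi ->
  forall D, D \in F -> inner D -> hull (phi D) = hull D.
Proof.
move=> hF PG ok; have sub := le_phi_sub hF ok; case: ok => [h1 h2 h3 h4 h5] D DF iD.
have hG := PG.1.
have nD := forest_nonempty hF DF.
have [D1 [D2 [D1F D2F dis e]]] := forest_split hF DF iD.
have c1 := split_child1 hF D1F D2F dis e DF.
have c2 := split_child2 hF DF D1F D2F dis e.
have ne12 : D1 != D2.
  apply/eqP=> e12; apply: (disj_sub_nonempty (A := D1) (B := D2)) => //.
  - by rewrite e12.
  - exact: forest_nonempty hF D1F.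
have [E1 [E2 [ce1 ce2 neE s1 s2]]] := h5 D D1 D2 c1 c2 ne12.
have [disE eE] := child2_split hG ce1 ce2 neE.
have [pDG ipD] := h2 D DF iD.
have npD := forest_nonempty hG pDG.
have [X [Y [XT YT disXY eXY]]] := T_split hT (hull_in hT npD) (hull_inner hT npD ipD).
have E1G : E1 \in G by case/and4P: ce1.
have E2G : E2 \in G by case/and4P: ce2.
have /set0Pn [x xD1] := forest_nonempty hF D1F.
have /set0Pn [y yD2] := forest_nonempty hF D2F.
have xD : x \in D by rewrite -e inE xD1.
have yD : y \in D by rewrite -e inE yD2 orbT.
have xE1 : x \in E1 by apply: (subsetP s1); apply: (subsetP (sub D1 D1F)).
have yE2 : y \in E2 by apply: (subsetP s2); apply: (subsetP (sub D2 D2F)).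
have sDu : D \subset hull (phi D) := subset_trans (sub D DF) (sub_hull hT npD).
case/orP: (split_sides hT PG pDG E1G E2G disE eE XT YT disXY eXY) => /andP [a b].
- symmetry; apply: (hull_both hT (hull_in hT npD) XT YT disXY eXY sDu xD _ yD).
  + exact: (subsetP a).
  + exact: (subsetP b).
- symmetry; apply: (hull_both hT (hull_in hT npD) YT XT _ _ sDu xD _ yD).
  + by rewrite disjoint_sym.
  + by rewrite setUC.
  + exact: (subsetP a).
  + exact: (subsetP b).
Qed.

Lemma child_forest0 C D : child (forest0 I) C D -> False.
Proof.
case/and4P=> /imsetP [i _ ->] /imsetP [j _ ->] p _.
by move: (proper_card p); rewrite !cards1.
Qed.

Lemma forest0_le F : forest_le (forest0 I) F.
Proof.
exists id; split=> //.
- by move=> A /imsetP [i _ ->]; rewrite /inner cards1.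
- by move=> C D /child_forest0.
- by move=> D C1 C2 /child_forest0.
Qed.

Lemma interval0_Pf F : interval0 T F <-> Pf F.
Proof.
split.
- case=> hF [_ [phi ok]]; split=> // D D' DF D'F eh.
  have sub := le_phi_sub hF ok.
  have hh := le_phi_hull hF (Pf_T hT) ok.
  have nD := forest_nonempty hF DF; have nD' := forest_nonempty hF D'F.
  case: (boolP (inner D)) => iD; last first.
    have [x ex] := not_inner_single nD iD.
    by rewrite ex; symmetry; apply: (hull_single hT nD'); rewrite -eh ex hull_set1.
  case: (boolP (inner D')) => iD'; last first.
    have [x ex] := not_inner_single nD' iD'.
    by rewrite ex; apply: (hull_single hT nD); rewrite eh ex hull_set1.
  case: ok => [h1 h2 h3 h4 h5].
  apply: h3; rewrite ?inE ?DF ?D'F ?iD ?iD' //.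
  have [pT _] := h2 D DF iD; have [pT' _] := h2 D' D'F iD'.
  by rewrite -(hull_id hT pT) -(hull_id hT pT') (hh D DF iD) (hh D' D'F iD').
- case=> hF inj; split=> //; split; first exact: forest0_le.
  exists hull; split.
  + by move=> i; apply: hull_set1.
  + move=> A AF iA; have nA := forest_nonempty hF AF.
    by split; [apply: hull_in | apply: hull_inner].
  + by move=> A B /andP [AF _] /andP [BF _]; apply: inj.
  + by move=> C D /and4P [CF DF p _]; apply: (hull_proper hT (conj hF inj) CF DF p).
  + move=> D C1 C2 c1 c2 ne.
    have [dis e] := child2_split hF c1 c2 ne.
    have DF : D \in F by case/and4P: c1.
    have C1F : C1 \in F by case/and4P: c1.
    have C2F : C2 \in F by case/and4P: c2.
    have nD := forest_nonempty hF DF.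
    have iD := child_inner hF c1.
    have uT := hull_in hT nD.
    have [X [Y [XT YT disXY eXY]]] := T_split hT uT (hull_inner hT nD iD).
    have cX := split_child1 (hTf hT) XT YT disXY eXY uT.
    have cY := split_child2 (hTf hT) uT XT YT disXY eXY.
    have neXY : X != Y.
      apply/eqP=> eq; apply: (disj_sub_nonempty (A := X) (B := Y)) => //.
      - by rewrite eq.
      - exact: forest_nonempty (hTf hT) XT.
    have nC1 := forest_nonempty hF C1F; have nC2 := forest_nonempty hF C2F.
    have hs1 : forall Z, Z \in T -> C1 \subset Z -> hull C1 \subset Z by move=> Z; apply: hull_min.
    have hs2 : forall Z, Z \in T -> C2 \subset Z -> hull C2 \subset Z by move=> Z; apply: hull_min.
    case/orP: (split_sides hT (conj hF inj) DF C1F C2F dis e XT YT disXY eXY) => /andP [a b].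
    * by exists X, Y; split=> //; [apply: hs1 | apply: hs2].
    * by exists Y, X; split=> //; [rewrite eq_sym | apply: hs1 | apply: hs2].
Qed.

Definition le' F G := forall A, A \in F -> exists2 B, B \in G & (A \subset B) && (hull A == hull B).

Lemma le_le' F G : Pf F -> Pf G -> forest_le F G -> le' F G.
Proof.
move=> [hF injF] PG [phi ok] A AF.
have nA := forest_nonempty hF AF.
case: (boolP (inner A)) => iA; last first.
  have [x ex] := not_inner_single nA iA.
  by exists A; rewrite ?subxx ?eqxx // ex; apply: forest_single PG.1.
exists (phi A); first by case: ok => _ h2 _ _ _; case: (h2 A AF iA).
by rewrite (le_phi_sub hF ok AF) (le_phi_hull hF PG ok AF iA) eqxx.
Qed.

Lemma le'_le F G : Pf F -> Pf G -> le' F G -> forest_le F G.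
Proof.
move=> [hF injF] [hG injG] le.
pose phi A := odflt A [pick B in G | hull B == hull A].
have phiP : forall A, A \in F -> [/\ phi A \in G, A \subset phi A & hull (phi A) = hull A].
  move=> A AF; have [B BG /andP [sAB /eqP hAB]] := le A AF.
  rewrite /phi; case: pickP => [B' /andP [B'G /eqP hB'] | /(_ B)]; last first.
    by rewrite BG hAB eqxx.
  have eB : B' = B by apply: injG => //; rewrite hB' hAB.
  by rewrite /= eB; split.
have hp : forall C D, child F C D -> phi C \proper phi D.
  move=> C D /and4P [CF DF pCD _].
  have [pCG sC hC] := phiP C CF; have [pDG sD hD] := phiP D DF.
  have ph := hull_proper hT (conj hF injF) CF DF pCD.
  have /set0Pn [x xC] := forest_nonempty hF CF.
  have xD : x \in D by apply: (subsetP (proper_sub pCD)).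
  case/orP: (forest_meet hG pCG pDG (subsetP sC x xC) (subsetP sD x xD)) => s.
  - rewrite properEneq s andbT; apply/eqP=> e.
    by move: ph; rewrite -hC -hD e properE andbN.
  - exfalso; have := hull_sub hT (conj hG injG) pDG pCG s.
    by rewrite hC hD => s'; move: ph; rewrite properE s' andbF.
exists phi; split.
- move=> i; have [pG _ h] := phiP _ (forest_single i hF).
  by apply: (hull_single hT (forest_nonempty hG pG)); rewrite h hull_set1.
- move=> A AF iA; have [pG s _] := phiP A AF; split=> //.
  by rewrite /inner; apply: leq_trans iA (subset_leq_card s).
- move=> A B /andP [AF _] /andP [BF _] e.
  by apply: injF => //; have [_ _ <-] := phiP A AF; have [_ _ <-] := phiP B BF; rewrite e.
- exact: hp.
- move=> D C1 C2 c1 c2 ne.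
  have [dis e] := child2_split hF c1 c2 ne.
  have DF : D \in F by case/and4P: c1.
  have C1F : C1 \in F by case/and4P: c1.
  have C2F : C2 \in F by case/and4P: c2.
  have [pDG sD hD] := phiP D DF.
  have [p1G s1 h1] := phiP C1 C1F.
  have [p2G s2 h2] := phiP C2 C2F.
  have ipD : inner (phi D).
    by rewrite /inner; apply: leq_trans (child_inner hF c1) (subset_leq_card sD).
  have [E1 [E2 [E1G E2G disE eE]]] := forest_split hG pDG ipD.
  have q1 := hp _ _ c1; have q2 := hp _ _ c2.
  have ce1 := split_child1 hG E1G E2G disE eE pDG.
  have ce2 := split_child2 hG pDG E1G E2G disE eE.
  have neE : E1 != E2.
    apply/eqP=> eq; apply: (disj_sub_nonempty (A := E1) (B := E2)) => //.
    - by rewrite eq.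
    - exact: forest_nonempty hG E1G.
  have same : forall Ej, Ej \in G -> Ej \proper phi D -> phi C1 \subset Ej -> phi C2 \subset Ej -> False.
    move=> Ej EjG pE a b.
    have sDE : D \subset Ej by rewrite -e subUset (subset_trans s1 a) (subset_trans s2 b).
    have := hull_sub hT (conj hF injF) DF DF (subxx D).
    have := hull_proper hT (conj hG injG) EjG pDG pE.
    have nD := forest_nonempty hF DF.
    have := hull_mono hT nD sDE; rewrite hD => x y _.
    by move: y; rewrite properE x andbF.
  have pE1 := split_proper1 hG E1G E2G disE eE.
  have pE2 := split_proper2 hG E1G E2G disE eE.
  case/orP: (sub_split hG E1G E2G disE eE p1G q1) => a;
  case/orP: (sub_split hG E1G E2G disE eE p2G q2) => b.
  + by exfalso; apply: (same E1).
  + by exists E1, E2; split.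
  + by exists E2, E1; split; rewrite // eq_sym.
  + by exfalso; apply: (same E2).
Qed.

Lemma le_iff F G : Pf F -> Pf G -> forest_le F G <-> le' F G.
Proof. by move=> PF PG; split; [apply: le_le' | apply: le'_le]. Qed.

End Order.


Section Abstract.
Variables (I : finType) (T : {set {set I}}).
Hypothesis hT : is_tree T.
Implicit Types (F G H : {set {set I}}) (A B C D E : {set I}).
Local Notation hull := (hull T).
Local Notation Pf := (Pf T).
Local Notation le' := (le' T).

Definition Sv F := [set hull A | A in F].

Lemma le'_refl F : le' F F.
Proof. by move=> A AF; exists A; rewrite ?subxx ?eqxx. Qed.

Lemma le'_trans F G H : le' F G -> le' G H -> le' F H.
Proof.
move=> l1 l2 A AF; have [B BG /andP [s1 /eqP h1]] := l1 A AF.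
have [C CH /andP [s2 /eqP h2]] := l2 B BG.
by exists C; rewrite ?(subset_trans s1 s2) ?h1 ?h2 ?eqxx.
Qed.

Lemma le'_S F G : le' F G -> Sv F \subset Sv G.
Proof.
move=> l; apply/subsetP=> u /imsetP [A AF ->].
have [B BG /andP [_ /eqP ->]] := l A AF; exact: imset_f.
Qed.

Lemma le'_rep F G A B : Pf G -> le' F G -> A \in F -> B \in G -> hull B = hull A -> A \subset B.
Proof.
move=> [_ injG] l AF BG h; have [B' B'G /andP [s /eqP h']] := l A AF.
by have -> : B = B' by apply: injG => //; rewrite h h'.
Qed.

Lemma not_sub_hull F A C : Pf F -> A \in F -> C \in F -> hull C \proper hull A -> ~~ (A \subset C).
Proof.
move=> PF AF CF p; apply/negP=> s.
have := hull_sub hT PF AF CF s; by move: p; rewrite properE => /andP [_ /negP].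
Qed.

Lemma meet_sub F A C x : Pf F -> A \in F -> C \in F -> hull C \proper hull A ->
  x \in A -> x \in C -> C \subset A.
Proof.
move=> PF AF CF p xA xC.
case/orP: (forest_meet PF.1 AF CF xA xC) => // s.
by move: (not_sub_hull PF AF CF p); rewrite s.
Qed.

Lemma meet_part A B1 B2 : A != set0 -> A \subset B1 :|: B2 -> ~~ (hull A \subset hull B2) ->
  exists2 x, x \in A & x \in B1.
Proof.
move=> nA sA nh; case: (boolP [exists x, (x \in A) && (x \in B1)]).
  by case/existsP=> x /andP [? ?]; exists x.
move/existsPn=> h; exfalso; move/negP: nh; apply.
apply: hull_mono => //; apply/subsetP=> x xA.
by move: (subsetP sA x xA); rewrite inE; move: (h x); rewrite xA /= => /negbTE ->.
Qed.

Lemma below_in F G B : Pf F -> Pf G -> le' F G -> B \in G ->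
  (forall B', B' \in G -> B' \subset B -> hull B' \in Sv F) -> B \in F.
Proof.
move=> PF PG l; elim/strong_ind: B => B IH BG hB.
have hG := PG.1; have hF := PF.1.
have nB := forest_nonempty hG BG.
case: (boolP (inner B)) => iB; last first.
  by have [x ->] := not_inner_single nB iB; apply: forest_single.
have [B1 [B2 [B1F B2F dis e]]] := forest_split hG BG iB.
have p1 := split_proper1 hG B1F B2F dis e.
have p2 := split_proper2 hG B1F B2F dis e.
have B1in : B1 \in F.
  apply: IH (proper_card p1) B1F _ => B' B'G s; apply: hB => //.
  exact: subset_trans s (proper_sub p1).
have B2in : B2 \in F.
  apply: IH (proper_card p2) B2F _ => B' B'G s; apply: hB => //.
  exact: subset_trans s (proper_sub p2).
have /imsetP [A AF hA] := hB B BG (subxx B).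
have sAB : A \subset B by apply: le'_rep PG l AF BG hA.
have nA := forest_nonempty hF AF.
have ph1 := hull_proper hT PG B1F BG p1.
have ph2 := hull_proper hT PG B2F BG p2.
have [x xA xB1] : exists2 x, x \in A & x \in B1.
  apply: (meet_part (B1 := B1) (B2 := B2) nA); first by rewrite e.
  rewrite -hA; apply/negP=> s; move: ph2; by rewrite properE s andbF.
have [y yA yB2] : exists2 y, y \in A & y \in B2.
  apply: (meet_part (B1 := B2) (B2 := B1) nA); first by rewrite setUC e.
  apply/negP=> s; move: ph1; by rewrite hA properE s andbF.
have s1 : B1 \subset A by apply: meet_sub PF AF B1in _ xA xB1; rewrite -hA.
have s2 : B2 \subset A by apply: meet_sub PF AF B2in _ yA yB2; rewrite -hA.
suff -> : B = A by [].
by apply/eqP; rewrite eqEsubset -{1}e subUset s1 s2 sAB.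
Qed.

Lemma le'_eqS F G : Pf F -> Pf G -> le' F G -> Sv G \subset Sv F -> F = G.
Proof.
move=> PF PG l sS.
have GF : G \subset F.
  apply/subsetP=> B BG; apply: below_in PF PG l BG _ => B' B'G _.
  by apply: (subsetP sS); apply: imset_f.
apply/eqP; rewrite eqEsubset GF andbT; apply/subsetP=> A AF.
have [B BG /andP [s /eqP h]] := l A AF.
by have -> : A = B by apply: PF.2 => //; apply: (subsetP GF).
Qed.

Lemma le'_uniq F F1 F2 Gv : Pf F -> Pf F1 -> Pf F2 -> le' F F1 -> le' F F2 ->
  Gv \in F1 -> Gv \in F2 -> (forall B, B \in F1 -> hull B != hull Gv -> hull B \in Sv F) ->
  le' F1 F2.
Proof.
move=> PF P1 P2 l1 l2 G1 G2 hS.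
elim/strong_ind=> B IH BF1.
have h1 := P1.1; have h2 := P2.1.
have nB := forest_nonempty h1 BF1.
case: (eqVneq (hull B) (hull Gv)) => hBv.
  have -> : B = Gv by apply: P1.2.
  by exists Gv; rewrite ?subxx ?eqxx.
case: (boolP (inner B)) => iB; last first.
  have [x ex] := not_inner_single nB iB.
  by exists B; rewrite ?subxx ?eqxx // ex; apply: forest_single.
have /imsetP [A AF hA] := hS B BF1 hBv.
have sAB : A \subset B by apply: le'_rep P1 l1 AF BF1 hA.
have [C CF2 /andP [sAC /eqP hAC]] := l2 A AF.
have nA := forest_nonempty PF.1 AF.
have [B1 [B2 [B1F B2F dis e]]] := forest_split h1 BF1 iB.
have p1 := split_proper1 h1 B1F B2F dis e.
have p2 := split_proper2 h1 B1F B2F dis e.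
have ph1 := hull_proper hT P1 B1F BF1 p1.
have ph2 := hull_proper hT P1 B2F BF1 p2.
have [C1 C1F /andP [s1 /eqP e1]] := IH _ (proper_card p1) B1F.
have [C2 C2F /andP [s2 /eqP e2]] := IH _ (proper_card p2) B2F.
have sub_part : forall Bi Ci, Bi \in F1 -> Ci \in F2 -> Bi \subset Ci -> hull Bi = hull Ci ->
    hull Bi \proper hull B -> (exists2 x, x \in A & x \in Bi) -> Ci \subset C.
  move=> Bi Ci BiF CiF sBC hBC ph [x xA xBi].
  apply: meet_sub P2 CF2 CiF _ (subsetP sAC x xA) (subsetP sBC x xBi).
  by rewrite -hBC -hAC -hA.
have x1 : exists2 x, x \in A & x \in B1.
  apply: (meet_part (B1 := B1) (B2 := B2) nA); first by rewrite e.
  apply/negP=> s; move: ph2; by rewrite hA properE s andbF.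
have x2 : exists2 x, x \in A & x \in B2.
  apply: (meet_part (B1 := B2) (B2 := B1) nA); first by rewrite setUC e.
  apply/negP=> s; move: ph1; by rewrite hA properE s andbF.
have sC1 := sub_part B1 C1 B1F C1F s1 e1 ph1 x1.
have sC2 := sub_part B2 C2 B2F C2F s2 e2 ph2 x2.
exists C => //; rewrite -hAC hA eqxx andbT.
by rewrite -e subUset (subset_trans s1 sC1) (subset_trans s2 sC2).
Qed.

End Abstract.


Section Construct.
Variables (I : finType) (T : {set {set I}}).
Hypothesis hT : is_tree T.
Local Notation hull := (hull T).
Local Notation Pf := (Pf T).
Local Notation le' := (le' T).
Local Notation Sv := (Sv T).

Variables (F G : {set {set I}}) (Gv Gv1 Gv2 : {set I}).
Hypotheses (PF : Pf F) (PG : Pf G) (le : le' F G) (GvG : Gv \in G) (nS : hull Gv \notin Sv F)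
  (G1F : Gv1 \in F) (G2F : Gv2 \in F) (dis12 : [disjoint Gv1 & Gv2]) (e12 : Gv1 :|: Gv2 = Gv).

Implicit Types (A B C D E X Y : {set I}).

Definition K := [set A in F | (A :&: Gv != set0) && ~~ (A \subset Gv)].
Definition M A := if A \in K then Gv :|: \bigcup_(C in K | hull C \subset hull A) C else A.
Definition F' := Gv |: [set M A | A in F].

Let hF := PF.1.
Let hG := PG.1.
Let nGv : Gv != set0 := forest_nonempty hG GvG.

Lemma KF A : A \in K -> A \in F.
Proof. by rewrite inE => /andP []. Qed.

Lemma K_meet A : A \in K -> exists2 x, x \in A & x \in Gv.
Proof. by rewrite inE => /and3P [_ /set0Pn [x]]; rewrite inE => /andP [? ?] _; exists x. Qed.

Lemma K_nsub A : A \in K -> ~~ (A \subset Gv).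
Proof. by rewrite inE => /and3P []. Qed.

Lemma notK A : A \in F -> A \notin K -> [disjoint A & Gv] || (A \subset Gv).
Proof.
move=> AF; rewrite inE AF /= negb_and !negbK -setI_eq0.
by case/orP=> ->; rewrite ?orbT.
Qed.

Lemma K_GA A B : A \in K -> B \in G -> A \subset B -> Gv \subset B.
Proof.
move=> AK BG sAB; have [x xA xGv] := K_meet AK.
case/orP: (forest_meet hG BG GvG (subsetP sAB x xA) xGv) => // s.
by move: (K_nsub AK); rewrite (subset_trans sAB s).
Qed.

Lemma K_hull A : A \in K -> hull Gv \proper hull A.
Proof.
move=> AK; have AF := KF AK; have [B BG /andP [sAB /eqP h]] := le AF.
rewrite properEneq; apply/andP; split.
  apply: contraNneq nS => ->; exact: imset_f.
have := hull_sub hT PG GvG BG (K_GA AK BG sAB).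
by rewrite -h.
Qed.

Lemma K_sub_hull A : A \in K -> Gv \subset hull A.
Proof. move=> AK; exact: subset_trans (sub_hull hT nGv) (proper_sub (K_hull AK)). Qed.

Lemma K_cmp A C : A \in K -> C \in K -> (hull A \subset hull C) || (hull C \subset hull A).
Proof.
move=> AK CK; have /set0Pn [x xGv] := nGv.
have nA := forest_nonempty hF (KF AK); have nC := forest_nonempty hF (KF CK).
exact: (forest_meet (hTf hT) (hull_in hT nA) (hull_in hT nC)
  (subsetP (K_sub_hull AK) x xGv) (subsetP (K_sub_hull CK) x xGv)).
Qed.

Lemma M_notK A : A \notin K -> M A = A.
Proof. by rewrite /M => /negbTE ->. Qed.

Lemma M_K A : A \in K -> M A = Gv :|: \bigcup_(C in K | hull C \subset hull A) C.
Proof. by rewrite /M => ->. Qed.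

Lemma M_sub A : A \subset M A.
Proof.
rewrite /M; case: ifP => AK //.
apply: subset_trans (subsetUr _ _); apply: (bigcup_max A) => //.
by rewrite AK subxx.
Qed.

Lemma M_hullsub A : A \in F -> M A \subset hull A.
Proof.
move=> AF; rewrite /M; case: ifP => AK; last exact: (sub_hull hT (forest_nonempty hF AF)).
rewrite subUset K_sub_hull //=; apply/bigcupsP=> C /andP [CK s].
exact: subset_trans (sub_hull hT (forest_nonempty hF (KF CK))) s.
Qed.

Lemma M_hull A : A \in F -> hull (M A) = hull A.
Proof.
move=> AF; have nA := forest_nonempty hF AF.
have nM : M A != set0.
  apply: contraNneq nA => e; apply/eqP; apply/setP=> x; rewrite inE.
  by apply/negP=> xA; move: (subsetP (M_sub A) x xA); rewrite e inE.
apply/eqP; rewrite eqEsubset; apply/andP; split.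
- exact: (hull_min hT nM (hull_in hT nA) (M_hullsub AF)).
- exact: (hull_mono hT nA (M_sub A)).
Qed.

Lemma M_G A B : A \in F -> B \in G -> A \subset B -> hull A = hull B -> M A \subset B.
Proof.
move=> AF BG sAB hAB; rewrite /M; case: ifP => AK //.
rewrite subUset (K_GA AK BG sAB) /=; apply/bigcupsP=> C /andP [CK s].
have CF := KF CK; have [BC BCG /andP [sC /eqP hC]] := le CF.
have GvBC := K_GA CK BCG sC.
have /set0Pn [x xGv] := nGv.
apply: subset_trans sC _.
case/orP: (forest_meet hG BCG BG (subsetP GvBC x xGv) (subsetP (K_GA AK BG sAB) x xGv)) => // s'.
have e : hull B = hull BC.
  apply/eqP; rewrite eqEsubset (hull_sub hT PG BG BCG s') /= -hC -hAB //.
suff -> : BC = B by [].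
by apply: PG.2.
Qed.

Lemma M_mono A B : A \in K -> B \in K -> hull A \subset hull B -> M A \subset M B.
Proof.
move=> AK BK s; rewrite (M_K AK) (M_K BK) subUset subsetUl /=.
apply: subset_trans (subsetUr _ _); apply/bigcupsP=> C /andP [CK sC].
by apply: (bigcup_max C) => //; rewrite CK (subset_trans sC s).
Qed.

Lemma M_in A : A \in F -> M A \in F'.
Proof. by move=> AF; rewrite /F' setU1r // imset_f. Qed.

Lemma Gv_in : Gv \in F'.
Proof. by rewrite /F' setU11. Qed.

Lemma F'P X : X \in F' -> X = Gv \/ exists2 A, A \in F & X = M A.
Proof. by rewrite /F' => /setU1P [->|/imsetP [A AF ->]]; [left | right; exists A]. Qed.


Lemma lamC X Y : [|| X \subset Y, Y \subset X | [disjoint X & Y]] ->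
  [|| Y \subset X, X \subset Y | [disjoint Y & X]].
Proof. by rewrite disjoint_sym; case/or3P=> ->; rewrite ?orbT. Qed.

Lemma KnotK A B : A \in K -> B \in F -> B \notin K -> (B \subset M A) || [disjoint B & M A].
Proof.
move=> AK BF BnK; case/orP: (notK BF BnK) => [dis | sub]; last first.
  by rewrite (M_K AK) (subset_trans sub (subsetUl _ _)).
case: (boolP [disjoint B & M A]); rewrite ?orbT // -setI_eq0 => /set0Pn [x].
rewrite inE => /andP [xB]; rewrite (M_K AK) => /setUP [xGv | /bigcupP [C /andP [CK sC] xC]].
  by move: (disjointFr dis xB); rewrite xGv.
case/orP: (forest_meet hF BF (KF CK) xB xC) => s.
  apply/orP; left; apply: subset_trans s _; apply: subset_trans (subsetUr _ _).
  by apply: (bigcup_max C) => //; rewrite CK sC.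
have [y yC yGv] := K_meet CK.
by move: (disjointFr dis (subsetP s y yC)); rewrite yGv.
Qed.

Lemma F'_lam X Y : X \in F' -> Y \in F' -> [|| X \subset Y, Y \subset X | [disjoint X & Y]].
Proof.
have GvM : forall A, A \in F -> [|| Gv \subset M A, M A \subset Gv | [disjoint Gv & M A]].
  move=> A AF; case: (boolP (A \in K)) => AK.
    by rewrite (M_K AK) subsetUl.
  rewrite (M_notK AK); case/orP: (notK AF AK) => h.
    by rewrite disjoint_sym h !orbT.
  by rewrite h orbT.
case/F'P=> [-> | [A AF ->]]; case/F'P=> [-> | [B BF ->]].
- by rewrite subxx.
- exact: GvM.
- exact/lamC/GvM.
case: (boolP (A \in K)) => AK; case: (boolP (B \in K)) => BK.
- case/orP: (K_cmp AK BK) => s; [by rewrite (M_mono AK BK s) | by rewrite (M_mono BK AK s) orbT].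
- rewrite (M_notK BK); apply: lamC; case/orP: (KnotK AK BF BK) => ->; by rewrite ?orbT.
- rewrite (M_notK AK); case/orP: (KnotK BK AF AK) => ->; by rewrite ?orbT.
- by rewrite (M_notK AK) (M_notK BK); apply: forest_lam hF AF BF.
Qed.

Lemma M_notK_in A : A \in F -> A \notin K -> A \in F'.
Proof. by move=> AF AK; rewrite -(M_notK AK); apply: M_in. Qed.

Lemma split_core A Z Z' Ain Aout : A \in K -> Z \in T -> Z' \in T -> [disjoint Z & Z'] ->
  Z :|: Z' = hull A -> Gv \subset Z -> Ain \in F -> Aout \in F -> [disjoint Ain & Aout] ->
  Ain :|: Aout = A -> Ain \subset Z -> Aout \subset Z' ->
  exists B1, exists B2, [/\ B1 \in F', B2 \in F', [disjoint B1 & B2] & B1 :|: B2 = M A].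
Proof.
move=> AK ZT Z'T disZ eZ GvZ AinF AoutF dis e sin sout.
have AF := KF AK.
have AoutZ : [disjoint Aout & Z] by apply: disjointWl sout _; rewrite disjoint_sym.
have CZ : forall C, C \in K -> hull C \proper hull A -> C \subset Z.
  move=> C CK p; have nC := forest_nonempty hF (KF CK).
  apply: subset_trans (sub_hull hT nC) _.
  case/orP: (sub_split (hTf hT) ZT Z'T disZ eZ (hull_in hT nC) p) => // s.
  have /set0Pn [x xGv] := nGv.
  move: (disjointFr disZ (subsetP GvZ x xGv)).
  by rewrite (subsetP s x (subsetP (K_sub_hull CK) x xGv)).
have AoutnK : Aout \notin K.
  apply/negP=> /K_meet [x xA xGv].
  by move: (disjointFr AoutZ xA); rewrite (subsetP GvZ x xGv).
have AoutF' := M_notK_in AoutF AoutnK.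
have [x xAin xGv] : exists2 x, x \in Ain & x \in Gv.
  have [x xA xGv] := K_meet AK; exists x => //.
  move: xA; rewrite -e inE => /orP [//|xAo].
  by move: (disjointFr AoutZ xAo); rewrite (subsetP GvZ x xGv).
have pAin : Ain \proper A := split_proper1 hF AinF AoutF dis e.
have Ain_case : (Ain \subset Gv) || ((Ain \in K) && (hull Ain \proper hull A)).
  case: (boolP (Ain \in K)) => AinK.
    by rewrite (hull_proper hT PF AinF AF pAin) orbT.
  case/orP: (notK AinF AinK) => d; last by rewrite d.
  by move: (disjointFr d xAin); rewrite xGv.
have AoutM : Aout \subset M A.
  by apply: subset_trans (M_sub A); rewrite -e subsetUr.
case: (pickP [pred C | (C \in K) && (hull C \proper hull A)]) => [C0 /= /andP [C0K p0] | none].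
- have PC0 : [pred C | (C \in K) && (hull C \proper hull A)] C0 by rewrite /= C0K p0.
  case: (arg_maxnP (fun C => #|hull C|) PC0) => Cs /andP [CsK ps] hmax.
  have le_star : forall C, C \in K -> hull C \proper hull A -> hull C \subset hull Cs.
    move=> C CK p; case/orP: (K_cmp CK CsK) => // s.
    have := hmax C; rewrite /= CK p => /(_ isT) lc.
    suff -> : hull C = hull Cs by [].
    by apply/eqP; rewrite eq_sym eqEcard s lc.
  have in_star : forall C, C \in K -> hull C \proper hull A -> C \subset M Cs.
    move=> C CK p; rewrite (M_K CsK); apply: subset_trans (subsetUr _ _).
    by apply: (bigcup_max C) => //; rewrite CK le_star.
  exists (M Cs); exists Aout; split=> //.
  + exact: (M_in (KF CsK)).
  + apply: disjointWl _ (_ : [disjoint Z & Aout]); last by rewrite disjoint_sym.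
    rewrite (M_K CsK) subUset GvZ /=; apply/bigcupsP=> C /andP [CK sC].
    by apply: CZ => //; apply: sub_proper_trans sC ps.
  + apply/eqP; rewrite eqEsubset; apply/andP; split.
    * rewrite subUset AoutM andbT; exact: M_mono CsK AK (proper_sub ps).
    * rewrite {1}(M_K AK) subUset; apply/andP; split.
        by apply: subset_trans (subsetUl _ _); rewrite (M_K CsK) subsetUl.
      apply/bigcupsP=> C /andP [CK sC].
      case: (eqVneq (hull C) (hull A)) => hC.
        have -> : C = A by apply: PF.2 => //; exact: KF.
        rewrite -e subUset subsetUr andbT; apply: subset_trans (subsetUl _ _).
        case/orP: Ain_case => [sG | /andP [AinK pA]].
          by apply: subset_trans sG _; rewrite (M_K CsK) subsetUl.
        exact: in_star.
      apply: subset_trans (subsetUl _ _); apply: in_star => //.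
      by rewrite properEneq hC.
- exists Gv; exists Aout; split=> //.
  + exact: Gv_in.
  + by apply: disjointWl GvZ _; rewrite disjoint_sym.
  + apply/eqP; rewrite eqEsubset; apply/andP; split.
    * by rewrite subUset AoutM (M_K AK) subsetUl.
    * rewrite (M_K AK) subUset subsetUl /=; apply/bigcupsP=> C /andP [CK sC].
      case: (eqVneq (hull C) (hull A)) => hC; last first.
        by move: (none C); rewrite /= CK properEneq hC sC.
      have -> : C = A by apply: PF.2 => //; exact: KF.
      rewrite -e subUset subsetUr andbT; apply: subset_trans (subsetUl _ _).
      case/orP: Ain_case => [// | /andP [AinK pA]].
      by move: (none Ain); rewrite /= AinK pA.
Qed.


Lemma F'_split X : X \in F' -> inner X -> exists B1, exists B2,
  [/\ B1 \in F', B2 \in F', [disjoint B1 & B2] & B1 :|: B2 = X].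
Proof.
case/F'P=> [-> | [A AF ->]] iX.
  have nK : forall Y, Y \subset Gv -> Y \notin K by move=> Y s; apply/negP=> /K_nsub; rewrite s.
  exists Gv1; exists Gv2; split=> //.
  - apply: (M_notK_in G1F); apply: nK; by rewrite -e12 subsetUl.
  - apply: (M_notK_in G2F); apply: nK; by rewrite -e12 subsetUr.
case: (boolP (A \in K)) => AK; last first.
  move: iX; rewrite (M_notK AK) => iA.
  have [A1 [A2 [A1F A2F dis e]]] := forest_split hF AF iA.
  have nK : forall Ai, Ai \in F -> Ai \subset A -> Ai \notin K.
    move=> Ai AiF s; apply/negP=> AiK; have [x xAi xGv] := K_meet AiK.
    case/orP: (notK AF AK) => d.
      by move: (disjointFr d (subsetP s x xAi)); rewrite xGv.
    by move: (K_nsub AiK); rewrite (subset_trans s d).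
  exists A1; exists A2; split=> //.
  - apply: (M_notK_in A1F); apply: (nK A1 A1F); by rewrite -e subsetUl.
  - apply: (M_notK_in A2F); apply: (nK A2 A2F); by rewrite -e subsetUr.
have nA := forest_nonempty hF AF.
have iA : inner A.
  case: (boolP (inner A)) => // iA; have [y ey] := not_inner_single nA iA.
  have [x xA xGv] := K_meet AK; move: (K_nsub AK).
  by move: xA; rewrite ey inE => /eqP <-; rewrite sub1set xGv.
have [A1 [A2 [A1F A2F dis e]]] := forest_split hF AF iA.
have uT := hull_in hT nA.
have [X0 [Y0 [XT YT disXY eXY]]] := T_split hT uT (hull_inner hT nA iA).
have disYX : [disjoint Y0 & X0] by rewrite disjoint_sym.
have eYX : Y0 :|: X0 = hull A by rewrite setUC.
have dis21 : [disjoint A2 & A1] by rewrite disjoint_sym.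
have e21 : A2 :|: A1 = A by rewrite setUC.
have ne : hull Gv != hull A by move: (K_hull AK); rewrite properEneq => /andP [].
have sGv : Gv \subset hull A := K_sub_hull AK.
have side : (Gv \subset X0) || (Gv \subset Y0).
  case/orP: (hull_sides hT uT XT YT disXY eXY nGv sGv ne) => s.
    by rewrite (subset_trans (sub_hull hT nGv) s).
  by rewrite (subset_trans (sub_hull hT nGv) s) orbT.
case/orP: (split_sides hT PF AF A1F A2F dis e XT YT disXY eXY) => /andP [a b];
case/orP: side => g.
- exact: (split_core AK XT YT disXY eXY g A1F A2F dis e a b).
- exact: (split_core AK YT XT disYX eYX g A2F A1F dis21 e21 b a).
- exact: (split_core AK XT YT disXY eXY g A2F A1F dis21 e21 b a).
- exact: (split_core AK YT XT disYX eYX g A1F A2F dis e a b).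
Qed.

Lemma F'_inj : {in F' &, injective hull}.
Proof.
have GvM : forall A, A \in F -> hull Gv = hull (M A) -> False.
  move=> A AF h; move: nS; rewrite h (M_hull AF).
  by rewrite (imset_f hull AF).
move=> X Y; case/F'P=> [-> | [A AF ->]]; case/F'P=> [-> | [B BF ->]] // h.
- by case: (GvM B BF h).
- by case: (GvM A AF (esym h)).
- by rewrite (PF.2 A B AF BF _) // -(M_hull AF) -(M_hull BF).
Qed.

Lemma M_single i : M [set i] = [set i].
Proof.
apply: M_notK; apply/negP=> iK; have [x xi xGv] := K_meet iK.
by move: (K_nsub iK); move: xi; rewrite inE => /eqP <-; rewrite sub1set xGv.
Qed.

Lemma Pf_F' : Pf F'.
Proof.
split; last exact: F'_inj.
apply: is_forestI.
- apply/negP=> /F'P [e | [A AF e]].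
    by move: nGv; rewrite -e eqxx.
  have := forest_nonempty hF AF; apply/negP; rewrite negbK.
  by apply/eqP; apply/setP=> x; rewrite inE; apply/negP=> xA; move: (subsetP (M_sub A) x xA); rewrite -e inE.
- by move=> i; rewrite -M_single; apply: M_in; apply: forest_single hF.
- exact: F'_lam.
- exact: F'_split.
Qed.

Lemma le_F_F' : le' F F'.
Proof. by move=> A AF; exists (M A); rewrite ?M_in // M_sub (M_hull AF) eqxx. Qed.

Lemma le_F'_G : le' F' G.
Proof.
move=> X; case/F'P=> [-> | [A AF ->]].
  by exists Gv; rewrite ?subxx ?eqxx.
have [B BG /andP [sAB /eqP h]] := le AF.
by exists B; rewrite // (M_G AF BG sAB h) (M_hull AF) h eqxx.
Qed.

Lemma S_F' : Sv F' = hull Gv |: Sv F.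
Proof.
rewrite /Sv /F' imsetU1; congr (_ |: _).
rewrite -imset_comp; apply: eq_in_imset => A AF /=; exact: M_hull.
Qed.

End Construct.


Definition key (I : finType) (A : {set I}) : nat := #|A| * #|{set I}| + enum_rank A.

Lemma key_lt (I : finType) (A B : {set I}) : A \proper B -> key A < key B.
Proof.
move=> p; have c := proper_card p; rewrite /key.
have r := ltn_ord (enum_rank A).
apply: (@leq_trans (#|A|.+1 * #|{set I}|)).
  by rewrite mulSn [X in _ < X]addnC ltn_add2l.
by apply: leq_trans (leq_addr _ _); rewrite leq_mul2r c orbT.
Qed.

Lemma key_inj (I : finType) : injective (@key I).
Proof.
move=> A B; rewrite /key => e.
have rA := ltn_ord (enum_rank A); have rB := ltn_ord (enum_rank B).
have N0 : 0 < #|{set I}| by apply: leq_ltn_trans rA.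
have := congr1 (fun n => n %% #|{set I}|) e; rewrite /= !modnMDl !modn_small //.
by move/val_inj/enum_rank_inj.
Qed.

Section Main.
Variables (I : finType) (T : {set {set I}}).
Hypothesis hT : is_tree T.
Local Notation hull := (hull T).
Local Notation Pf := (Pf T).
Local Notation le' := (le' T).
Local Notation Sv := (Sv T).
Local Notation key := (@key I).
Implicit Types (F G H x y z : {set {set I}}) (A B C : {set I}).

Definition lam F G := \max_(B in G | hull B \notin Sv F) key (hull B).

Definition minv F G v := forall w, w \in Sv G -> w \notin Sv F -> key v <= key w.

Lemma minv_below F G v w : minv F G v -> w \in Sv G -> w \proper v -> w \in Sv F.
Proof.
move=> mv wG p; apply/negPn/negP=> wF.
by move: (mv w wG wF); rewrite leqNgt (key_lt p).
Qed.

Lemma step F G v : Pf F -> Pf G -> le' F G -> v \in Sv G -> v \notin Sv F -> minv F G v ->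
  exists2 F', Pf F' & [/\ le' F F', le' F' G & Sv F' = v |: Sv F].
Proof.
move=> PF PG le vG vF mv.
have [Gv GvG ev] := imsetP vG.
have hG := PG.1.
have nGv := forest_nonempty hG GvG.
have nS : hull Gv \notin Sv F by rewrite -ev.
have iGv : inner Gv.
  case: (boolP (inner Gv)) => // iG; have [x ex] := not_inner_single nGv iG.
  move: vF; rewrite ev ex => /negP []; exact: (imset_f hull (forest_single x PF.1)).
have [G1 [G2 [G1G G2G dis e]]] := forest_split hG GvG iGv.
have below : forall Gi, Gi \in G -> Gi \proper Gv -> Gi \in F.
  move=> Gi GiG p; apply: (below_in hT PF PG le GiG) => B' B'G s.
  apply: (minv_below mv); first exact: imset_f.
  rewrite ev; apply: sub_proper_trans (hull_sub hT PG B'G GiG s) _.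
  exact: (hull_proper hT PG GiG GvG p).
have G1F := below G1 G1G (split_proper1 hG G1G G2G dis e).
have G2F := below G2 G2G (split_proper2 hG G1G G2G dis e).
exists (F' T F Gv).
  exact: (Pf_F' hT PF PG le GvG nS G1F G2F dis e).
split.
- exact: (le_F_F' hT PF PG le GvG nS).
- exact: (le_F'_G hT PF PG le GvG nS).
- by rewrite (S_F' hT PF PG le GvG nS) ev.
Qed.

Lemma step_uniq F G v F1 F2 : Pf F -> Pf G -> Pf F1 -> Pf F2 ->
  le' F F1 -> le' F1 G -> le' F F2 -> le' F2 G ->
  Sv F1 = v |: Sv F -> Sv F2 = v |: Sv F -> v \in Sv G -> minv F G v -> F1 = F2.
Proof.
move=> PF PG P1 P2 l1 l1G l2 l2G e1 e2 vG mv.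
have [Gv GvG ev] := imsetP vG.
have inFi : forall Fi, Pf Fi -> le' Fi G -> Sv Fi = v |: Sv F -> Gv \in Fi.
  move=> Fi Pi li ei; apply: (below_in hT Pi PG li GvG) => B' B'G s.
  rewrite ei; case: (eqVneq (hull B') v) => h; first by rewrite h setU11.
  apply/setU1P; right; apply: (minv_below mv); first exact: imset_f.
  by rewrite properEneq h ev (hull_sub hT PG B'G GvG s).
have G1 := inFi F1 P1 l1G e1; have G2 := inFi F2 P2 l2G e2.
have l12 : le' F1 F2.
  apply: (le'_uniq hT PF P1 P2 l1 l2 G1 G2) => B BF1 h.
  have : hull B \in Sv F1 by apply: imset_f.
  by rewrite e1 => /setU1P [hv|//]; move: h; rewrite hv ev eqxx.
by apply: (le'_eqS hT P1 P2 l12); rewrite e1 e2.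
Qed.

Definition cov F G := [/\ Pf F, Pf G, le' F G & exists2 v, v \notin Sv F & Sv G = v |: Sv F].

Lemma strict F G : Pf F -> Pf G -> le' F G -> F <> G -> exists2 u, u \in Sv G & u \notin Sv F.
Proof.
move=> PF PG l ne; case: (boolP [exists u, (u \in Sv G) && (u \notin Sv F)]).
  by case/existsP=> u /andP [? ?]; exists u.
move/existsPn=> h; exfalso; apply: ne; apply: (le'_eqS hT PF PG l).
apply/subsetP=> u uG; by move: (h u); rewrite uG /= negbK.
Qed.

Local Notation P0 := (interval0 T).
Local Notation le0 := (@forest_le I).

Lemma min_exists (D : {set {set I}}) u0 : u0 \in D -> exists2 v, v \in D & forall w, w \in D -> key v <= key w.
Proof.
move=> u0D; case: (arg_minnP key u0D) => v vD h; exists v => // w wD; exact: h.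
Qed.

Lemma covers_iff F G : covers P0 le0 F G <-> cov F G.
Proof.
split.
- case=> PF PG [lFG ne] nz.
  move: PF PG => /(interval0_Pf hT) PF /(interval0_Pf hT) PG.
  have l := le_le' hT PF PG lFG.
  split=> //.
  have [u0 u0G u0F] := strict PF PG l ne.
  have [v /setDP [vG vF] vmin] := min_exists (u0 := u0) (D := Sv G :\: Sv F) (introT setDP (conj u0G u0F)).
  have mv : minv F G v by move=> w wG wF; apply: vmin; apply/setDP.
  exists v => //.
  have [F1 P1 [l1 l1G e1]] := step PF PG l vG vF mv.
  case: (eqVneq F1 G) => [<- //| neG].
  exfalso; apply: nz; exists F1; split.
  + exact/(interval0_Pf hT).
  + split; first exact: (le'_le hT PF P1 l1).
    move=> eF; move: vF; rewrite eF e1 setU11 //.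
  + split; first exact: (le'_le hT P1 PG l1G).
    by move/eqP: neG.
- case=> PF PG l [v vF e]; split; try exact/(interval0_Pf hT).
  + split; first exact: (le'_le hT PF PG l).
    by move=> eF; subst G; move: vF; rewrite e setU11.
  + case=> z [/(interval0_Pf hT) Pz [lFz nFz] [lzG nzG]].
    have l1 := le_le' hT PF Pz lFz; have l2 := le_le' hT Pz PG lzG.
    have [u uz uF] := strict PF Pz l1 nFz.
    have : u \in Sv G := subsetP (le'_S l2) u uz.
    rewrite e => /setU1P [eu|]; last by rewrite (negbTE uF).
    apply: nzG; apply: (le'_eqS hT Pz PG l2).
    rewrite e; apply/subsetP=> w /setU1P [->|wF]; first by rewrite -eu.
    exact: (subsetP (le'_S l1)).
Qed.

Lemma lam_cov F G v : Pf F -> Pf G -> le' F G -> v \notin Sv F -> Sv G = v |: Sv F -> lam F G = key v.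
Proof.
move=> PF PG l vF e.
have : v \in Sv G by rewrite e setU11.
case/imsetP=> Gv GvG ev.
rewrite /lam (big_pred1 Gv) ?ev // => B /=.
apply/andP/eqP => [[BG hB] | ->]; last by rewrite GvG -ev.
have : hull B \in Sv G by apply: imset_f.
rewrite e => /setU1P [hv|]; last by rewrite (negbTE hB).
by apply: PG.2 => //; rewrite hv ev.
Qed.

Lemma cov_S F G : cov F G -> exists u, [/\ u \notin Sv F, Sv G = u |: Sv F & lam F G = key u].
Proof.
case=> PF PG l [u uF e]; exists u; split=> //; exact: lam_cov.
Qed.

Lemma chain_le x s y : sat_chain P0 le0 x s y -> Pf x -> Pf y /\ le' x y.
Proof.
elim: s x => [|z s IH] x /=; first by move=> -> Px; split=> //; apply: le'_refl.
case=> /covers_iff [_ Pz lxz _] ch _; have [Py lzy] := IH z ch Pz.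
by split=> //; apply: le'_trans lxz lzy.
Qed.

Lemma chain_nil x s : sat_chain P0 le0 x s x -> Pf x -> s = [::].
Proof.
case: s => [//|z s] /= [c ch] Px.
have [PF Pz lxz [u uF e]] := (covers_iff x z).1 c.
have [_ lzx] := chain_le ch Pz.
have : u \in Sv x by apply: (subsetP (le'_S lzx)); rewrite e setU11.
by rewrite (negbTE uF).
Qed.

Lemma label_in x s y w : sat_chain P0 le0 x s y -> Pf x -> w \in Sv y -> w \notin Sv x ->
  key w \in chain_label lam x s.
Proof.
elim: s x => [|z s IH] x /=; first by move=> -> _ ->.
case=> /covers_iff c ch Px wy wx.
have [u [uF e lu]] := cov_S c.
case: c => _ Pz _ _.
rewrite inE; case: (eqVneq w u) => [-> | ne]; first by rewrite lu eqxx.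
apply/orP; right; apply: IH ch Pz wy _.
apply/negP; rewrite e => /setU1P [ewu|wx']; [by move: ne; rewrite ewu eqxx | by move: wx; rewrite wx'].
Qed.

Lemma label_range x s y l : sat_chain P0 le0 x s y -> Pf x -> l \in chain_label lam x s ->
  exists w, [/\ w \in Sv y, w \notin Sv x & l = key w].
Proof.
elim: s x => [|z s IH] x //=.
case=> /covers_iff c ch Px.
have [u [uF e lu]] := cov_S c.
case: c => _ Pz _ _.
have [Py lzy] := chain_le ch Pz.
rewrite inE => /orP [/eqP -> | lin].
  exists u; split=> //; apply: (subsetP (le'_S lzy)); by rewrite e setU11.
have [w [wy wz ->]] := IH z ch Pz lin.
exists w; split=> //; apply: contra wz; rewrite e => wx; by rewrite setU1r.
Qed.

Lemma main_EL n : forall x y, Pf x -> Pf y -> le' x y -> #|Sv y :\: Sv x| = n ->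
  exists s, [/\ sat_chain P0 le0 x s y, sorted leq (chain_label lam x s),
     (forall s', sat_chain P0 le0 x s' y -> sorted leq (chain_label lam x s') -> s' = s) &
     (forall s', sat_chain P0 le0 x s' y -> s' <> s ->
        lexlt (chain_label lam x s) (chain_label lam x s'))].
Proof.
elim: n => [|n IH] x y Px Py lxy hn.
- have exy : x = y.
    apply: (le'_eqS hT Px Py lxy); rewrite -setD_eq0; apply/eqP; exact: cards0_eq.
  subst y; exists [::]; split=> //.
  + by move=> s' ch _; apply: chain_nil ch Px.
  + by move=> s' ch ne; case: ne; apply: chain_nil ch Px.
have [u0 u0D] : exists u0, u0 \in Sv y :\: Sv x.
  by apply/set0Pn; rewrite -card_gt0 hn.
have [v vD vmin] := min_exists u0D.
have /setDP [vy vx] := vD.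
have mv : minv x y v by move=> w wy wx; apply: vmin; apply/setDP.
have [x1 P1 [l1 l1y e1]] := step Px Py lxy vy vx mv.
have c1 : cov x x1 by split=> //; exists v.
have lam1 : lam x x1 = key v by apply: lam_cov.
have hn1 : #|Sv y :\: Sv x1| = n.
  have : #|Sv y :\: Sv x| = (v \in Sv y :\: Sv x) + #|(Sv y :\: Sv x) :\ v| := cardsD1 _ _.
  rewrite hn vD add1n => /eqP; rewrite eqSS => /eqP ->.
  apply: eq_card => w; rewrite e1 !inE negb_or.
  by case: (w == v); case: (w \in Sv x); case: (w \in Sv y).
have [s1 [ch1 so1 un1 lx1]] := IH x1 y P1 Py l1y hn1.
exists (x1 :: s1); split.
- by split=> //; apply/covers_iff.
- rewrite /= lam1 (path_sortedE leq_trans) so1 andbT.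
  apply/allP=> l lin; have [w [wy wx1 ->]] := label_range ch1 P1 lin.
  apply: vmin; apply/setDP; split=> //; apply: contra wx1; rewrite e1 => wx.
  by rewrite setU1r.
- case=> [|z s''] ch so.
    by move: ch => /= exy; move: vx; rewrite exy vy.
  case: ch => /covers_iff cz ch''.
  have [u [ux ez lu]] := cov_S cz.
  case: (cz) => _ Pz lxz _.
  have [_ lzy] := chain_le ch'' Pz.
  move: so; rewrite /= lu (path_sortedE leq_trans) => /andP [/allP sall so''].
  have uy : u \in Sv y by apply: (subsetP (le'_S lzy)); rewrite ez setU11.
  have uv : u = v.
    case: (eqVneq u v) => // ne; exfalso.
    have vz : v \notin Sv z.
      apply/negP; rewrite ez => /setU1P [evu|vx']; [by move: ne; rewrite evu eqxx | by move: vx; rewrite vx'].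

    have kin := label_in ch'' Pz vy vz.
    have a := sall _ kin.
    have b : key v <= key u by apply: vmin; apply/setDP.
    by move: ne; rewrite (key_inj (_ : key u = key v)) ?eqxx //; apply/eqP; rewrite eqn_leq a b.
  have zx1 : z = x1.
    apply: (step_uniq Px Py Pz P1 lxz lzy l1 l1y _ e1 vy mv); by rewrite ez uv.
  subst z; by rewrite (un1 s'' ch'' so'').
- case=> [|z s''] ch ne.
    by move: ch => /= exy; move: vx; rewrite exy vy.
  case: ch => /covers_iff cz ch''.
  have [u [ux ez lu]] := cov_S cz.
  case: (cz) => _ Pz lxz _.
  have [_ lzy] := chain_le ch'' Pz.
  have uy : u \in Sv y by apply: (subsetP (le'_S lzy)); rewrite ez setU11.
  rewrite /= lu lam1.
  case: (eqVneq u v) => [uv | nuv].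
    have zx1 : z = x1.
      apply: (step_uniq Px Py Pz P1 lxz lzy l1 l1y _ e1 vy mv); by rewrite ez uv.
    subst z; rewrite uv ltnn eqxx /=; apply: lx1 ch'' _.
    by move=> e; apply: ne; rewrite e.
  have b : key v <= key u by apply: vmin; apply/setDP.
  rewrite leq_eqVlt in b; case/orP: b => [/eqP /key_inj e | -> //].
  by move: nuv; rewrite e eqxx.
Qed.

End Main.

Theorem theorem4p4 (I : finType) (T : {set {set I}}) (hT : is_tree T) :
  EL_shellable (interval0 T) (@forest_le I).
Proof.
exists (lam T) => x y Px Py lxy.
move: Px Py => /(interval0_Pf hT) Px /(interval0_Pf hT) Py.
exact: (main_EL hT Px Py (le_le' hT Px Py lxy) (erefl _)).
Qed.
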